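(* Let $X$ be a set, $\mathcal{F}\subseteq\mathcal{P}(X)$ a $\sigma$-field, and $\mu:\mathcal{F}\to[0,1]$ a countably subadditive set function with $\mu(\emptyset)=0$. Then the pseudometric space $(\mathcal{F}, d_\mu)$, where $d_\mu(A,B):=\mu(A\triangle B)$, is complete.
   Context: $\mu$ is countably subadditive if for any $A,A_1,A_2,\ldots\in\mathcal{F}$, $I_A\le\sum_{k=1}^\infty I_{A_k}$ implies $\mu(A)\le\sum_{k=1}^\infty\mu(A_k)$, where $I_B$ denotes the indicator function of $B$. *)

(* Defs.v *)
From HB Require Import structures.
From mathcomp Require Import all_boot all_order all_algebra.
From mathcomp Require Import all_classical all_reals all_analysis.
Set Implicit Arguments. Unset Strict Implicit. Unset Printing Implicit Defensive.
Import Order.TTheory GRing.Theory Num.Theory.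
Local Open Scope classical_set_scope.
Local Open Scope ring_scope.

Definition countably_subadditive (d : measure_display) (T : measurableType d)
    (R : realType) (mu : set T -> R) : Prop :=
  forall (A : set T) (B : nat -> set T),
    measurable A -> (forall k, measurable (B k)) ->
    (forall x : T, ((\1_A x : R)%:E <= \sum_(0 <= k <oo) (\1_(B k) x : R)%:E)%E) ->
    ((mu A)%:E <= \sum_(0 <= k <oo) (mu (B k))%:E)%E.

Definition dmu (d : measure_display) (T : measurableType d) (R : realType)
    (mu : set T -> R) (A B : set T) : R := mu (A `+` B).

(* Main.v *)
Require Import Defs.
From HB Require Import structures.
From mathcomp Require Import all_boot all_order all_algebra.
From mathcomp Require Import all_classical all_reals all_analysis.
From Stdlib Require Import Classical.
From mathcomp Require Import ring lra.
Import Order.TTheory GRing.Theory Num.Theory.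
Local Open Scope classical_set_scope.
Local Open Scope ring_scope.
Lemma ind_le d (T : measurableType d) (R : realType) (A : set T) (B : nat -> set T) x :
  (A x -> exists k, B k x) ->
  ((\1_A x : R)%:E <= \sum_(0 <= k <oo) (\1_(B k) x : R)%:E)%E.
Proof.
have h0 n : (0 <= (\1_(B n) x : R)%:E)%E by rewrite lee_fin indicE ler0n.
case: (pselect (A x)) => Ax.
  move=> /(_ Ax) [k Bk].
  rewrite indicE mem_set//.
  apply: le_trans (nneseries_lim_ge k.+1 _); last by move=> n _ _.
  rewrite big_nat_recr//= indicE mem_set// -[X in (X <= _)%E]add0e.
  by apply: leeD => //; apply: sume_ge0 => i _.
by rewrite indicE memNset// => _; apply: nneseries_ge0 => n _ _.
Qed.
Section H.
Variables (d : measure_display) (T : measurableType d) (R : realType).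
Variable mu : set T -> R.
Hypothesis mu_range : forall A : set T, measurable A -> 0 <= mu A <= 1.
Hypothesis mu_subadd : countably_subadditive mu.
Hypothesis mu0 : mu set0 = 0.

Lemma subadd2 (A Y Z : set T) : measurable A -> measurable Y -> measurable Z ->
  A `<=` Y `|` Z -> mu A <= mu Y + mu Z.
Proof.
move=> mA mY mZ AYZ.
pose B k := if k == 0%N then Y else if k == 1%N then Z else set0.
have mB k : measurable (B k) by rewrite /B; case: ifP => // _; case: ifP.
have := @mu_subadd A B mA mB.
have H : forall x, ((\1_A x : R)%:E <= \sum_(0 <= k <oo) (\1_(B k) x : R)%:E)%E.
  move=> x; apply: ind_le => /AYZ [Yx|Zx]; [by exists 0%N | by exists 1%N].
move=> /(_ H).
rewrite (@nneseries_split _ _ 0 2).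
  rewrite add0n eseries0; last by case=> [|[|i]] // _ _; rewrite /B /= mu0.
  by rewrite adde0 /= !big_nat_recr//= big_nil add0e -EFinD lee_fin /B /=.
by move=> k _; rewrite lee_fin; case/andP: (@mu_range _ (mB k)).
Qed.

Lemma tail (C : nat -> set T) (mC : forall k, measurable (C k))
  (hC : forall k, mu (C k `+` C k.+1) < 1 / (2 ^ k.+1)%:R) j :
  mu (C j `+` \bigcap_i \bigcup_k C (i + k)%N) <= 1 / 2 ^+ j.
Proof.
set B := \bigcap_i \bigcup_k C (i + k)%N.
have mB : measurable B.
  apply: bigcapT_measurable => i; apply: bigcupT_measurable => k; exact: mC.
have mY (X Y : set T) : measurable X -> measurable Y -> measurable (X `+` Y).
  by move=> mX mY'; apply: measurableU; apply: measurableD.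
pose S k := C (j + k)%N `+` C (j + k)%N.+1.
have mS k : measurable (S k) by apply: mY; apply: mC.
have cover x : (C j `+` B) x -> exists k, S k x.
  case=> [[Cj nB]|[Bx nCj]]; apply: NNPP => nex.
    have all m : C (j + m)%N x.
      elim: m => [|m IH];  first by rewrite addn0.
      apply: NNPP => nC; apply: nex; exists m; left; split => //.
      by rewrite -addnS.
    apply: nB => i _; exists j => //; rewrite addnC; exact: all.
  have all m : ~ C (j + m)%N x.
    elim: m => [|m IH]; first by rewrite addn0.
    move=> Cm; apply: nex; exists m; right; split => //.
    by rewrite -addnS.
  by case: (Bx j I) => k _; apply: all.
have := @mu_subadd _ S (mY _ _ (mC j) mB) mS (fun x => @ind_le _ _ _ _ _ x (@cover x)).
move=> h; rewrite -lee_fin; apply: (le_trans h).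
apply: le_trans.
  apply: (@lee_nneseries _ _ (fun k => (1 / (2 ^ (k + j.+1))%:R)%:E)).
    by move=> i _ _; rewrite lee_fin; case/andP: (@mu_range _ (mS i)).
  move=> n _; rewrite lee_fin; apply: ltW; rewrite /S.
  by have := hC (j + n)%N; rewrite addnS addnC.
by move: (@cvg_geometric_eseries_half R 1 j) => /cvg_lim ->.
Qed.

Lemma tri (X Y Z : set T) : measurable X -> measurable Y -> measurable Z ->
  dmu mu X Z <= dmu mu X Y + dmu mu Y Z.
Proof.
have mY (P Q : set T) : measurable P -> measurable Q -> measurable (P `+` Q).
  by move=> mX mY'; apply: measurableU; apply: measurableD.
move=> mX mY' mZ; rewrite /dmu; apply: subadd2; try exact: mY.
move=> x H; have := classic (X x); have := classic (Y x); have := classic (Z x).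
move: H; rewrite /setY /setU /setD /mkset /=; tauto.
Qed.
End H.

Theorem proposition3p4 (d : measure_display) (T : measurableType d) (R : realType)
  (mu : set T -> R)
  (mu_range : forall A : set T, measurable A -> 0 <= mu A <= 1)
  (mu_subadd : countably_subadditive mu)
  (mu0 : mu set0 = 0) :
  forall A : nat -> set T, (forall n, measurable (A n)) ->
    (forall e : R, 0 < e -> exists N : nat, forall n m : nat,
        (N <= n)%N -> (N <= m)%N -> dmu mu (A n) (A m) < e) ->
    exists2 B : set T, measurable B &
      (fun n => dmu mu (A n) B : R^o) @ \oo --> 0.
Proof.
move=> A mA cauchy.
have eps_gt0 k : 0 < 1 / (2 ^ k.+1)%:R :> R.
  by rewrite divr_gt0// ltr0n expn_gt0.
have /choice[N hN] : forall k, exists N, forall n m, (N <= n)%N -> (N <= m)%N ->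
    dmu mu (A n) (A m) < 1 / (2 ^ k.+1)%:R := fun k => cauchy _ (eps_gt0 k).
pose M k := (\sum_(i < k.+1) N i)%N.
have NM k : (N k <= M k)%N by rewrite /M big_ord_recr /= leq_addl.
have MM k : (M k <= M k.+1)%N by rewrite /M (big_ord_recr k.+1) /= leq_addr.
pose C k := A (M k).
have mC k : measurable (C k) by exact: mA.
have hC k : mu (C k `+` C k.+1) < 1 / (2 ^ k.+1)%:R.
  exact: (hN k _ _ (NM k) (leq_trans (NM k) (MM k))).
set B := \bigcap_i \bigcup_k C (i + k)%N.
have mB : measurable B.
  apply: bigcapT_measurable => i; apply: bigcupT_measurable => k; exact: mC.
exists B => //.
apply/cvgr0Pnorm_lt => e e0.
pose j := Num.bound (2 / e).
have hj : 2 / e < 2 ^+ j := upper_nthrootP (leqnn _).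
have q0 : 0 < 2 ^+ j :> R by rewrite exprn_gt0.
have hq : 2 / 2 ^+ j < e.
  by rewrite ltr_pdivrMr// mulrC -ltr_pdivrMr.
have hT := @tail _ _ _ mu mu_range mu_subadd _ mC hC j.
exists (M j) => // n hn /=.
have d0 : 0 <= dmu mu (A n) B.
  rewrite /dmu; by case/andP: (@mu_range _ (measurableU _ _ (measurableD (mA n) mB) (measurableD mB (mA n)))) => //.
rewrite ger0_norm //.
have h1 : dmu mu (A n) (C j) < 1 / (2 ^ j.+1)%:R.
  exact: hN j _ _ (leq_trans (NM j) hn) (NM j).
have htri := @tri _ _ _ mu mu_range mu_subadd mu0 _ _ _ (mA n) (mC j) mB.
have e2 : 1 / (2 ^ j.+1)%:R = (1 / 2 ^+ j) / 2 :> R.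
  rewrite natrX exprS; field; rewrite expf_neq0 //.
rewrite e2 in h1; rewrite /dmu in htri h1 hT d0 *.
have : 2 / 2 ^+ j = 2 * (1 / 2 ^+ j) :> R by rewrite mulrA mulr1.
move: (1 / 2 ^+ j) hq h1 hT htri => q; lra.
Qed.
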